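(* Let $\tau$ be a strongly $(n,p;a,c)$ regular graph with $0<c<p<n-1$, whose adjacency matrix has eigenvalues $p$, $r$ and $s$, where $r=\frac{a-c+\sqrt{(a-c)^2+4(p-c)}}{2}$ and $s=\frac{a-c-\sqrt{(a-c)^2+4(p-c)}}{2}$. Then: (1) for every odd positive integer $k$: $(rn+p-r)^k+(-n+p-r)^k p+(p-r)^k(n-p-1)\ge 0$; (2) for every odd positive integer $k$: $(rn+p-s)^k+(-n+p-s)^k p+(p-s)^k(n-p-1)\ge 0$; (3) for all positive integers $k,l$ with $k+l$ odd: $(rn+p-r)^k(rn+p-s)^l+(-n+p-r)^k(-n+p-s)^l p+(p-r)^k(p-s)^l(n-p-1)\ge 0$; (4) for every positive integer $k$ and every odd positive integer $l$: $(|s|n+s-p)^k(rn+p-s)^l+(n+s-p)^k(-n+p-s)^l p+(s-p)^k(p-s)^l(n-p-1)\ge 0$.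
   Context: A graph is strongly $(n,p;a,c)$ regular if it is a simple graph on $n$ vertices, not complete and not null, every vertex has exactly $p$ neighbours, every pair of adjacent vertices has exactly $a$ common neighbours, and every pair of distinct non-adjacent vertices has exactly $c$ common neighbours. *)

(* Defs.v *)
From mathcomp Require Import all_boot all_order all_algebra.
Set Implicit Arguments. Unset Strict Implicit. Unset Printing Implicit Defensive.
Import Order.TTheory GRing.Theory Num.Theory.

Definition simple_graph (T : finType) (e : rel T) : Prop :=
  (forall x y, e x y = e y x) /\ (forall x, ~~ e x x).

Definition strongly_regular (T : finType) (e : rel T) (n p a c : nat) : Prop :=
  simple_graph e /\
  #|T| = n /\
  (exists x y, x != y /\ ~~ e x y) /\
  (exists x y, e x y) /\
  (forall x, #|[set y | e x y]| = p) /\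
  (forall x y, e x y -> #|[set z | e x z && e y z]| = a) /\
  (forall x y, x != y -> ~~ e x y -> #|[set z | e x z && e y z]| = c).

Local Open Scope ring_scope.

Definition srg_r (R : rcfType) (p a c : nat) : R :=
  ((a%:R - c%:R) + Num.sqrt ((a%:R - c%:R) ^+ 2 + 4 * (p%:R - c%:R))) / 2.
Definition srg_s (R : rcfType) (p a c : nat) : R :=
  ((a%:R - c%:R) - Num.sqrt ((a%:R - c%:R) ^+ 2 + 4 * (p%:R - c%:R))) / 2.

(* Main.v *)
Require Import Defs.
From mathcomp Require Import all_boot all_order all_algebra ring lra.
Set Implicit Arguments. Unset Strict Implicit.
Import Order.TTheory GRing.Theory Num.Theory.
Local Open Scope ring_scope.
Definition gram (R : realDomainType) (T : finType) (K : T -> T -> R) : Prop :=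
  exists (U : finType) (w : U -> R) (f : T -> U -> R),
    (forall t, 0 <= w t) /\ (forall x y, K x y = \sum_t w t * (f x t * f y t)).

Lemma gram_mul (R : realDomainType) (T : finType) (K1 K2 : T -> T -> R) :
  gram K1 -> gram K2 -> gram (fun x y => K1 x y * K2 x y).
Proof.
move=> [U1 [w1 [f1 [w1p h1]]]] [U2 [w2 [f2 [w2p h2]]]].
exists (U1 * U2)%type, (fun t => w1 t.1 * w2 t.2), (fun x t => f1 x t.1 * f2 x t.2); split.
  by move=> t; apply: mulr_ge0.
move=> x y; rewrite h1 h2 mulr_suml.
rewrite -(pair_bigA _ (fun i j => w1 i * w2 j * (f1 x i * f2 x j * (f1 y i * f2 y j)))).
apply: eq_bigr => i _; rewrite mulr_sumr; apply: eq_bigr => j _.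
by ring.
Qed.

Lemma gram_one (R : realDomainType) (T : finType) : gram (fun _ _ : T => (1 : R)).
Proof.
exists unit, (fun _ => 1), (fun _ _ => 1); split => // x y.
by rewrite (big_pred1 tt) ?mul1r // => -[].
Qed.

Lemma gram_exp (R : realDomainType) (T : finType) (K : T -> T -> R) k :
  gram K -> gram (fun x y => K x y ^+ k).
Proof.
move=> hK; elim: k => [|k IH]; first by apply: gram_one.
have := gram_mul hK IH.
by move=> [U [w [f [wp h]]]]; exists U, w, f; split=> // x y; rewrite exprS h.
Qed.

Lemma gram_sum_ge0 (R : realDomainType) (T : finType) (K : T -> T -> R) :
  gram K -> 0 <= \sum_x \sum_y K x y.
Proof.
move=> [U [w [f [wp h]]]].
have -> : \sum_x \sum_y K x y = \sum_t w t * ((\sum_x f x t) * (\sum_y f y t)).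
  under eq_bigr do under eq_bigr do rewrite h.
  under eq_bigr do rewrite exchange_big.
  rewrite exchange_big; apply: eq_bigr => t _.
  rewrite big_distrlr mulr_sumr; apply: eq_bigr => x _.
  by rewrite mulr_sumr.
apply: sumr_ge0 => t _; apply: mulr_ge0 => //.
by rewrite -expr2 sqr_ge0.
Qed.

Lemma gram_add (R : realDomainType) (T : finType) (K1 K2 : T -> T -> R) :
  gram K1 -> gram K2 -> gram (fun x y => K1 x y + K2 x y).
Proof.
move=> [U1 [w1 [f1 [w1p h1]]]] [U2 [w2 [f2 [w2p h2]]]].
exists (U1 + U2)%type, (fun t => match t with inl i => w1 i | inr j => w2 j end),
  (fun x t => match t with inl i => f1 x i | inr j => f2 x j end); split.
  by case.
by move=> x y; rewrite big_sumType h1 h2.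
Qed.

Lemma gram_ext (R : realDomainType) (T : finType) (K1 K2 : T -> T -> R) :
  (forall x y, K1 x y = K2 x y) -> gram K1 -> gram K2.
Proof.
by move=> E [U [w [f [wp h]]]]; exists U, w, f; split=> // x y; rewrite -E h.
Qed.

Lemma gram_const (R : realDomainType) (T : finType) (c : R) :
  0 <= c -> gram (fun _ _ : T => c).
Proof.
move=> c0; exists unit, (fun _ => c), (fun _ _ => 1); split => // x y.
by rewrite (big_pred1 tt) ?mulr1 // => -[].
Qed.
Section G.
Variables (R : realDomainType) (T : finType) (e : rel T) (n p : nat).
Hypothesis esym : forall x y, e x y = e y x.
Hypothesis eirr : forall x, ~~ e x x.
Hypothesis hn : #|T| = n.
Hypothesis hp : forall x, #|[set y | e x y]| = p.

Definition dl (x y : T) : R := (x == y)%:R.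
Definition ad (x y : T) : R := (e x y)%:R.

Lemma card_sum (S : {set T}) : \sum_z ((z \in S)%:R : R) = #|S|%:R.
Proof.
rewrite -sum1_card natr_sum [in RHS]big_mkcond /=; apply: eq_bigr => z _.
by case: (z \in S).
Qed.

Lemma sum_delta x (g : T -> R) : \sum_z dl x z * g z = g x.
Proof.
rewrite (bigD1 x) //= /dl eqxx mul1r big1 ?addr0 // => z.
by rewrite eq_sym => /negbTE ->; rewrite mul0r.
Qed.

Lemma sum_dl x : \sum_z dl x z = 1.
Proof. by rewrite -(sum_delta x (fun _ => 1)); apply: eq_bigr => z _; rewrite mulr1. Qed.

Lemma sum_ad x : \sum_z ad x z = p%:R.
Proof.
rewrite -(hp x) -card_sum; apply: eq_bigr => z _; by rewrite /ad inE.
Qed.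

Lemma sum_one : \sum_(z : T) (1 : R) = n%:R.
Proof. by rewrite sumr_const hn. Qed.

Lemma sum_row (g : bool -> bool -> R) x :
  \sum_y g (x == y) (e x y) = g true false + g false true * p%:R
     + g false false * (n%:R - p%:R - 1).
Proof.
have E : forall y, g (x == y) (e x y) =
   dl x y * g true false + ad x y * g false true + g false false * (1 - dl x y - ad x y).
  move=> y; rewrite /dl /ad; case: eqP => [<-|_].
    by rewrite (negbTE (eirr x)) /=; ring.
  by case: (e x y) => /=; ring.
under eq_bigr do rewrite E.
rewrite !big_split /= -!mulr_suml -mulr_sumr !sumrB sum_one sum_ad.
rewrite sum_dl; ring.
Qed.

Definition Nc x y : R := #|[set z | e x z && e y z]|%:R.

Lemma sum_adad x y : \sum_z ad x z * ad y z = Nc x y.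
Proof.
rewrite /Nc -card_sum; apply: eq_bigr => z _; by rewrite /ad inE -natrM mulnb.
Qed.

Lemma dlC x y : dl x y = dl y x. Proof. by rewrite /dl eq_sym. Qed.
Lemma adC x y : ad x y = ad y x. Proof. by rewrite /ad esym. Qed.

Lemma quad (al be ga : R) x y :
  \sum_z (al * dl x z + be * ad x z + ga) * (al * dl y z + be * ad y z + ga)
  = al ^+ 2 * dl x y + 2 * al * be * ad x y + 2 * al * ga + be ^+ 2 * Nc x y
    + 2 * be * ga * p%:R + ga ^+ 2 * n%:R.
Proof.
have E : forall z, (al * dl x z + be * ad x z + ga) * (al * dl y z + be * ad y z + ga)
  = al ^+ 2 * (dl x z * dl y z) + al * be * (dl x z * ad y z)
    + al * be * (dl y z * ad x z) + be ^+ 2 * (ad x z * ad y z)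
    + al * ga * dl x z + al * ga * dl y z + be * ga * ad x z + be * ga * ad y z
    + ga ^+ 2 * 1.
  by move=> z; ring.
under eq_bigr do rewrite E.
rewrite !big_split /= -!mulr_sumr !sum_delta sum_adad !sum_dl !sum_ad sum_one.
rewrite (dlC y x) (adC y x); ring.
Qed.

Lemma Nc_row x y : Nc x y = if x == y then p%:R else Nc x y.
Proof.
case: eqP => // <-; rewrite /Nc -(hp x); congr (_%:R); apply: eq_card => z.
by rewrite !inE andbb.
Qed.

Lemma sum_Nc x : \sum_y Nc x y = p%:R ^+ 2.
Proof.
under eq_bigr do rewrite -sum_adad.
rewrite exchange_big /=.
under eq_bigr do rewrite -mulr_sumr.
under eq_bigr do (under eq_bigr do rewrite adC; rewrite sum_ad).
by rewrite -mulr_suml sum_ad expr2.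
Qed.

Lemma gram_of (al be ga w A C : R) (g : bool -> bool -> R) :
  (forall x y, e x y -> Nc x y = A) ->
  (forall x y, x != y -> ~~ e x y -> Nc x y = C) -> 0 <= w ->
  g true false = w * (al ^+ 2 + 2 * al * ga + be ^+ 2 * p%:R + 2 * be * ga * p%:R + ga ^+ 2 * n%:R) ->
  g false true = w * (2 * al * be + 2 * al * ga + be ^+ 2 * A + 2 * be * ga * p%:R + ga ^+ 2 * n%:R) ->
  g false false = w * (2 * al * ga + be ^+ 2 * C + 2 * be * ga * p%:R + ga ^+ 2 * n%:R) ->
  gram (fun x y => g (x == y) (e x y)).
Proof.
move=> hA hC w0 g1 g2 g3.
exists T, (fun _ => w), (fun x z => al * dl x z + be * ad x z + ga); split => // x y.
rewrite -mulr_sumr quad.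
case: (eqVneq x y) => [<-|nxy].
  by rewrite Nc_row /dl /ad eqxx (negbTE (eirr x)) g1 /=; ring.
case exy: (e x y).
  by rewrite (hA _ _ exy) /dl /ad (negbTE nxy) exy g2 /=; ring.
by rewrite (hC _ _ nxy (negbT exy)) /dl /ad (negbTE nxy) exy g3 /=; ring.
Qed.
End G.

Theorem mainTheorem3 (R : rcfType) (T : finType) (e : rel T) (n p a c : nat) :
  strongly_regular e n p a c ->
  (0 < c)%N -> (c < p)%N -> (p < n - 1)%N ->
  let r : R := srg_r R p a c in
  let s : R := srg_s R p a c in
  let nR : R := n%:R in
  let pR : R := p%:R in
  [/\ (forall k : nat, odd k ->
         0 <= (r * nR + pR - r) ^+ k + (- nR + pR - r) ^+ k * pR
              + (pR - r) ^+ k * (nR - pR - 1)),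
      (forall k : nat, odd k ->
         0 <= (r * nR + pR - s) ^+ k + (- nR + pR - s) ^+ k * pR
              + (pR - s) ^+ k * (nR - pR - 1)),
      (forall k l : nat, (0 < k)%N -> (0 < l)%N -> odd (k + l) ->
         0 <= (r * nR + pR - r) ^+ k * (r * nR + pR - s) ^+ l
              + (- nR + pR - r) ^+ k * (- nR + pR - s) ^+ l * pR
              + (pR - r) ^+ k * (pR - s) ^+ l * (nR - pR - 1))
    & (forall k l : nat, (0 < k)%N -> odd l ->
         0 <= (`|s| * nR + s - pR) ^+ k * (r * nR + pR - s) ^+ l
              + (nR + s - pR) ^+ k * (- nR + pR - s) ^+ l * pR
              + (s - pR) ^+ k * (pR - s) ^+ l * (nR - pR - 1))].
Proof.
move=> [[esym eirr] [hn [_ [[x0 [y0 exy0]] [hp [ha hc]]]]]] c0 cp pn r s nR pR.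
have n0 : (0 < n)%N by rewrite -hn; apply/card_gt0P; exists x0.
have hA : forall x y, e x y -> Nc R e x y = a%:R.
  by move=> x y /ha; rewrite /Nc => ->.
have hC : forall x y, x != y -> ~~ e x y -> Nc R e x y = c%:R.
  by move=> x y nxy nexy; rewrite /Nc hc.
have hrel : pR ^+ 2 = pR + a%:R * pR + c%:R * (nR - pR - 1).
  rewrite -(sum_Nc R esym hp x0).
  rewrite -(sum_row eirr hn hp (fun b1 b2 => if b1 then pR else if b2 then a%:R else c%:R) x0).
  apply: eq_bigr => y _; rewrite (Nc_row R hp).
  case: eqP => // /eqP nxy; case exy: (e x0 y); first exact: hA.
  by apply: hC => //; rewrite exy.
have key : forall g : bool -> bool -> R, gram (fun x y => g (x == y) (e x y)) ->
    0 <= g true false + g false true * pR + g false false * (nR - pR - 1).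
  move=> g /gram_sum_ge0.
  under eq_bigr do rewrite (sum_row eirr hn hp).
  by rewrite sumr_const hn pmulrn_lge0.
have cpR : 0 < pR - c%:R by rewrite subr_gt0 ltr_nat.
have c0R : 0 < c%:R :> R by rewrite ltr0n.
have nge : 0 <= nR by rewrite ler0n.
set D := (a%:R - c%:R) ^+ 2 + 4 * (pR - c%:R).
have D0 : 0 < D by rewrite /D; apply: ltr_wpDl; [exact: sqr_ge0|]; apply: mulr_gt0.
set q := Num.sqrt D.
have q2 : q ^+ 2 = D by rewrite sqr_sqrtr // ltW.
have q0 : 0 < q by rewrite sqrtr_gt0.
have hrq : r = (a%:R - c%:R + q) / 2 by [].
have hsq : s = (a%:R - c%:R - q) / 2 by [].
have hrms : r - s = q by rewrite hrq hsq; field.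
have hsum : r + s = a%:R - c%:R by rewrite hrq hsq; field.
have hrs : r * s = c%:R - pR.
  have -> : r * s = ((a%:R - c%:R) ^+ 2 - q ^+ 2) / 4 by rewrite hrq hsq; field.
  by rewrite q2 /D; field.
clearbody r s.
have hnc : nR * c%:R = (pR - r) * (pR - s).
  have -> : (pR - r) * (pR - s) = pR ^+ 2 - (r + s) * pR + r * s by ring.
  rewrite hsum hrs hrel; ring.
have s0 : s < 0 by nra.
have r0 : 0 < r by nra.
have pR0 : 0 <= pR by rewrite ler0n.
have ps0 : 0 < pR - s by lra.
have n0R : 0 < nR by rewrite ltr0n.
have pr0 : 0 < pR - r.
  by have := mulr_gt0 n0R c0R; rewrite hnc pmulr_lgt0.
have rs0 : 0 < r - s by lra.
have hcR : c%:R = r * s + pR by rewrite hrs; ring.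
have haR : a%:R = r + s + (r * s + pR) by rewrite -hcR hsum; ring.
have hnR : nR = (pR - r) * (pR - s) / (r * s + pR).
  by rewrite -hcR -hnc mulfK // gt_eqF.
have cne : r * s + pR != 0 by rewrite -hcR gt_eqF.
have rsne : r - s != 0 by rewrite gt_eqF.
have prne : pR - r != 0 by rewrite gt_eqF.
have psne : pR - s != 0 by rewrite gt_eqF.
pose g1 (b1 b2 : bool) := if b1 then r * nR + pR - r else if b2 then - nR + pR - r else pR - r.
have G1 : gram (fun x y => g1 (x == y) (e x y)).
  apply: (gram_of (al:=r) (be:=-1) (ga:=(pR - r)/nR) (w:=nR/(r-s)) esym eirr hn hp hA hC).
  - by apply: divr_ge0 => //; apply: ltW.
  - by rewrite /g1 -/nR -/pR ?haR ?hcR hnR; field; rewrite -/pR cne psne prne rsne.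
  - by rewrite /g1 -/nR -/pR ?haR ?hcR hnR; field; rewrite -/pR cne psne prne rsne.
  - by rewrite /g1 -/nR -/pR ?haR ?hcR hnR; field; rewrite -/pR cne psne prne rsne.
pose g2 (b1 b2 : bool) := if b1 then r * nR + pR - s else if b2 then - nR + pR - s else pR - s.
have G2 : gram (fun x y => g2 (x == y) (e x y)).
  apply: (gram_ext _ (gram_add G1 (gram_const T (ltW rs0)))) => x y /=.
  by rewrite /g1 /g2; case: (x == y); case: (e x y); ring.
pose g3 (b1 b2 : bool) := if b1 then `|s| * nR + s - pR else if b2 then nR + s - pR else s - pR.
have G3 : gram (fun x y => g3 (x == y) (e x y)).
  apply: (gram_of (al:=-s) (be:=1) (ga:=-(pR - s)/nR) (w:=nR/(r-s)) esym eirr hn hp hA hC).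
  - by apply: divr_ge0 => //; apply: ltW.
  - by rewrite /g3 ltr0_norm // -/nR -/pR ?haR ?hcR hnR; field; rewrite -/pR cne psne prne rsne.
  - by rewrite /g3 -/nR -/pR ?haR ?hcR hnR; field; rewrite -/pR cne psne prne rsne.
  - by rewrite /g3 -/nR -/pR ?haR ?hcR hnR; field; rewrite -/pR cne psne prne rsne.
split.
- move=> k _; exact: (key (fun b1 b2 => g1 b1 b2 ^+ k) (gram_exp k G1)).
- move=> k _; exact: (key (fun b1 b2 => g2 b1 b2 ^+ k) (gram_exp k G2)).
- move=> k l _ _ _.
  exact: (key (fun b1 b2 => g1 b1 b2 ^+ k * g2 b1 b2 ^+ l) (gram_mul (gram_exp k G1) (gram_exp l G2))).
- move=> k l _ _.
  exact: (key (fun b1 b2 => g3 b1 b2 ^+ k * g2 b1 b2 ^+ l) (gram_mul (gram_exp k G3) (gram_exp l G2))).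
Qed.
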